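(* Let $0\le\beta<1$ and let $f=h+\overline{g}\in\widetilde{\mathcal{G}}^{0}_{\mathcal{H}}(\beta)$ with $h(z)=z+\sum_{n=2}^\infty a_nz^n$, $g(z)=\sum_{n=2}^\infty b_nz^n$. Then $|a_n|+|b_n|\le 2(1-\beta)$ for all $n\ge2$, and for all $z\in\mathbb{D}$, $$\beta|z|+(1-\beta)\frac{1-|z|}{1+|z|}|z|\le |f(z)|\le \beta|z|+(1-\beta)\frac{1+|z|}{1-|z|}|z|.$$ Both growth inequalities are sharp: for $f(z)=z+\sum_{n=2}^\infty 2(1-\beta)z^n$ (which lies in $\widetilde{\mathcal{G}}^{0}_{\mathcal{H}}(\beta)$), equality holds on the right at $z=r$ and on the left at $z=-r$, $0\le r<1$.
   Context: $\mathbb{D}=\{z\in\mathbb{C}:|z|<1\}$. $\mathcal{H}_0$ denotes the class of harmonic functions $f=h+\overline{g}$ on $\mathbb{D}$, where $h,g$ are analytic in $\mathbb{D}$ of the form $h(z)=z+\sum_{n=2}^\infty a_nz^n$ and $g(z)=\sum_{n=2}^\infty b_nz^n$. For $0\le\beta<1$, $\widetilde{\mathcal{G}}^{0}_{\mathcal{H}}(\beta)$ is the set of $f=h+\overline{g}\in\mathcal{H}_0$ such that $\operatorname{Re}\big(h(z)/z\big)-\beta>|g(z)/z|$ for all $z\in\mathbb{D}$ (with $h(z)/z$ and $g(z)/z$ extended analytically to $z=0$). *)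

(* Defs.v *)
From Stdlib Require Import Reals.
From Coquelicot Require Import Coquelicot.

Definition in_disk (z : C) : Prop := (Cmod z < 1)%R.

(* Class H_0: f = h + conj g with h(z) = z + sum_{n>=2} a_n z^n and
   g(z) = sum_{n>=2} b_n z^n analytic in D.  h, g are given by their Taylor
   coefficient sequences a, b (a_0 = 0, a_1 = 1, b_0 = b_1 = 0), the power
   series converging on D to h, g respectively. *)
Definition in_H0 (a b : nat -> C) (h g : C -> C) : Prop :=
  a 0%nat = 0%C /\ a 1%nat = 1%C /\ b 0%nat = 0%C /\ b 1%nat = 0%C /\
  (forall z : C, in_disk z -> is_pseries a z (h z) /\ is_pseries b z (g z)).

Definition harm (h g : C -> C) (z : C) : C := (h z + Cconj (g z))%C.

(* Class G~^0_H(beta): Re(h(z)/z) - beta > |g(z)/z| on D, where h(z)/z and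
   g(z)/z are extended analytically to z = 0 by their values a_1 and b_1. *)
Definition in_G0H (beta : R) (a b : nat -> C) (h g : C -> C) : Prop :=
  in_H0 a b h g /\
  (Re (a 1%nat) - beta > Cmod (b 1%nat))%R /\
  (forall z : C, in_disk z -> z <> 0%C ->
     (Re (h z / z)%C - beta > Cmod (g z / z)%C)%R).

(* The extremal function f(z) = z + sum_{n>=2} 2(1-beta) z^n
   = z + 2(1-beta) z^2/(1-z), with g = 0. *)
Definition ext_a (beta : R) (n : nat) : C :=
  match n with
  | 0%nat => 0%C
  | 1%nat => 1%C
  | _ => RtoC (2 * (1 - beta))%R
  end.
Definition ext_b (n : nat) : C := 0%C.
Definition ext_h (beta : R) (z : C) : C :=
  (z + RtoC (2 * (1 - beta))%R * (z * z) / (1 - z))%C.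
Definition ext_g (z : C) : C := 0%C.

(* Main.v *)
Require Import Defs.
From Stdlib Require Import Reals Lra Lia Psatz.
From Coquelicot Require Import Coquelicot.
Open Scope C_scope.

Lemma Ceq (a b : C) : fst a = fst b -> snd a = snd b -> a = b.
Proof. destruct a, b; simpl; intros; subst; reflexivity. Qed.

Fixpoint csum (f : nat -> C) (n : nat) : C :=
  match n with O => 0 | S n => csum f n + f n end.

Lemma csum_ext (f g : nat -> C) n : (forall k, (k < n)%nat -> f k = g k) -> csum f n = csum g n.
Proof. induction n; simpl; intros H; auto. rewrite IHn, H; auto. Qed.

Lemma csum_plus (f g : nat -> C) n : csum (fun k => f k + g k) n = csum f n + csum g n.
Proof. induction n; simpl. ring. rewrite IHn; ring. Qed.

Lemma csum_scal (a : C) (f : nat -> C) n : csum (fun k => a * f k) n = a * csum f n.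
Proof. induction n; simpl. ring. rewrite IHn; ring. Qed.

Lemma csum_scal_r (a : C) (f : nat -> C) n : csum (fun k => f k * a) n = csum f n * a.
Proof. induction n; simpl. ring. rewrite IHn; ring. Qed.

Lemma csum_zero (f : nat -> C) n : (forall k, (k < n)%nat -> f k = 0) -> csum f n = 0.
Proof. intros H. rewrite (csum_ext f (fun _ => 0) n H). clear H. induction n; simpl; auto.
 rewrite IHn; ring. Qed.

Lemma csum_mult (f g : nat -> C) n m : csum f n * csum g m = csum (fun i => csum (fun k => f i * g k) m) n.
Proof. induction n; simpl. ring. rewrite <- IHn, csum_scal. ring. Qed.

Lemma csum_swap (u : nat -> nat -> C) n m :
  csum (fun i => csum (u i) m) n = csum (fun j => csum (fun i => u i j) n) m.
Proof. revert m. induction n; intros m; simpl.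
 - symmetry; apply csum_zero; auto.
 - rewrite IHn, <- csum_plus. reflexivity. Qed.

Lemma csum_delta (v : nat -> C) a n :
  csum (fun k => if Nat.eqb k a then v k else 0) n = if Nat.ltb a n then v a else 0.
Proof. induction n; simpl; auto. rewrite IHn.
 destruct (Nat.eqb_spec n a); destruct (Nat.ltb_spec a n); destruct (Nat.ltb_spec a (S n)); subst; try lia; ring.
Qed.

Lemma csum_conj (f : nat -> C) n : Cconj (csum f n) = csum (fun k => Cconj (f k)) n.
Proof. induction n; simpl. apply Ceq; simpl; ring. rewrite Cplus_conj, IHn; auto. Qed.

Lemma csum_Re (f : nat -> C) n : Re (csum f n) = fst (csum f n). reflexivity. Qed.

Lemma Re_plus (a b : C) : Re (a + b) = (Re a + Re b)%R. reflexivity. Qed.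

Lemma csum_Re_ge (f : nat -> C) n x : (forall k, (k < n)%nat -> x <= Re (f k))%R -> (INR n * x <= Re (csum f n))%R.
Proof. induction n; cbn [csum]; intros H. simpl; lra. rewrite Re_plus.
 assert (A := IHn (fun k Hk => H k ltac:(lia))). assert (B := H n ltac:(lia)).
 rewrite S_INR; lra. Qed.

Fixpoint rsum (f : nat -> R) (n : nat) : R :=
  match n with O => 0%R | S n => (rsum f n + f n)%R end.

Lemma Cmod_csum (f : nat -> C) n : (Cmod (csum f n) <= rsum (fun k => Cmod (f k)) n)%R.
Proof. induction n; simpl. rewrite Cmod_0; lra.
 eapply Rle_trans. apply Cmod_triangle. lra. Qed.

Lemma rsum_le f g n : (forall k, (k < n)%nat -> f k <= g k)%R -> (rsum f n <= rsum g n)%R.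
Proof. induction n; simpl; intros H. lra. assert (A := IHn (fun k Hk => H k ltac:(lia))). assert (B := H n ltac:(lia)). lra. Qed.

Lemma rsum_geom q n : (rsum (fun k => q ^ k) n * (1 - q) = 1 - q ^ n)%R.
Proof. induction n; simpl. ring. rewrite Rmult_plus_distr_r, IHn. ring. Qed.

Lemma csum_geom (w : C) n : csum (fun k => w ^ k) n * (1 - w) = 1 - w ^ n.
Proof. induction n; simpl. ring. rewrite Cmult_plus_distr_r, IHn. ring. Qed.

Lemma pow_n_Cpow (z : C) n : pow_n z n = z ^ n.
Proof. induction n; simpl; try rewrite IHn; auto. Qed.

Lemma sum_n_csum (f : nat -> C) n : sum_n f n = csum f (S n).
Proof. induction n. rewrite sum_O. simpl. apply Ceq; simpl; ring.
 rewrite sum_Sn, IHn. reflexivity. Qed.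
Open Scope C_scope.

Definition ee (t : R) : C := (cos t, sin t).

Lemma ee_mult a b : ee a * ee b = ee (a + b).
Proof. unfold ee, Cmult; simpl. rewrite cos_plus, sin_plus. apply Ceq; simpl; ring. Qed.

Lemma ee_pow a n : ee a ^ n = ee (INR n * a).
Proof. induction n. simpl. unfold ee. rewrite Rmult_0_l, cos_0, sin_0. reflexivity.
 rewrite Cpow_S, IHn, ee_mult, S_INR. f_equal. ring. Qed.

Lemma ee_conj a : Cconj (ee a) = ee (- a).
Proof. unfold ee, Cconj; simpl. rewrite cos_neg, sin_neg. reflexivity. Qed.

Lemma Cmod_ee a : Cmod (ee a) = 1%R.
Proof. unfold Cmod, ee; simpl. pose proof (sin2_cos2 a). unfold Rsqr in H.
 match goal with |- sqrt ?x = _ => replace x with 1%R by lra end. apply sqrt_1. Qed.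

Lemma ee_2pi n : ee (2 * PI * INR n) = 1.
Proof. unfold ee. replace (2 * PI * INR n)%R with (0 + 2 * INR n * PI)%R by ring.
 rewrite cos_period, sin_period, cos_0, sin_0. reflexivity. Qed.

Lemma ee_ne1 t : (0 < t < 2 * PI)%R -> ee t <> 1.
Proof. intros H E. assert (C1 : cos t = 1%R) by (unfold ee in E; injection E; auto).
 replace t with (2 * (t/2))%R in C1 by field. rewrite cos_2a_sin in C1.
 assert (0 < sin (t/2))%R by (apply sin_gt_0; lra). nra. Qed.

Lemma ee_ne1' t : (0 < Rabs t < 2 * PI)%R -> ee t <> 1.
Proof. intros H. destruct (Rle_or_lt 0 t).
 - rewrite Rabs_pos_eq in H by lra. apply ee_ne1; lra.
 - rewrite Rabs_left in H by lra. intros E. apply (ee_ne1 (- t)); [lra|].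
   rewrite <- ee_conj, E. apply Ceq; simpl; ring. Qed.

Lemma roots_sum N a b : (a < N)%nat -> (b < N)%nat ->
  csum (fun j => ee (INR j * (2 * PI * (INR a - INR b) / INR N))) N =
  if Nat.eqb a b then RtoC (INR N) else 0.
Proof. intros Ha Hb. assert (HN : (0 < INR N)%R) by (apply lt_0_INR; lia).
 destruct (Nat.eqb_spec a b).
 - subst. rewrite (csum_ext _ (fun _ => 1)).
   + clear. induction N; cbn [csum]. reflexivity. rewrite IHN, S_INR. apply Ceq; simpl; ring.
   + intros. unfold ee. replace (INR k * (2 * PI * (INR b - INR b) / INR N))%R with 0%R by (field; lra).
     rewrite cos_0, sin_0; reflexivity.
 - set (t := (2 * PI * (INR a - INR b) / INR N)%R).
   rewrite (csum_ext _ (fun j => ee t ^ j)) by (intros; rewrite ee_pow; reflexivity).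
   assert (Hw : ee t <> 1).
   { apply ee_ne1'. unfold t. assert (INR a <> INR b) by (intro E; apply INR_eq in E; auto).
     assert (Rabs (INR a - INR b) < INR N)%R.
     { apply lt_INR in Ha. apply lt_INR in Hb. pose proof (pos_INR a). pose proof (pos_INR b).
       apply Rabs_def1; lra. }
     assert (0 < Rabs (INR a - INR b))%R by (apply Rabs_pos_lt; lra).
     unfold Rdiv. rewrite !Rabs_mult, Rabs_inv, (Rabs_pos_eq (INR N)), (Rabs_pos_eq 2), (Rabs_pos_eq PI) by (pose proof PI_RGT_0; lra).
     pose proof PI_RGT_0. split.
     + apply Rmult_lt_0_compat; [|apply Rinv_0_lt_compat; lra]. nra.
     + apply (Rmult_lt_reg_r (INR N)); auto. rewrite Rmult_assoc, Rinv_l, Rmult_1_r by lra. nra. }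
   assert (E := csum_geom (ee t) N).
   rewrite ee_pow in E. unfold t in E.
   replace (INR N * (2 * PI * (INR a - INR b) / INR N))%R with (2 * PI * INR a + - (2 * PI * INR b))%R in E by (field; lra).
   rewrite <- ee_mult, <- ee_conj, !ee_2pi in E.
   replace (1 - 1 * Cconj 1) with (RtoC 0) in E by (apply Ceq; simpl; ring).
   destruct (Ceq_dec (csum (fun j => ee t ^ j) N) 0) as [Z|Z]; auto. exfalso.
   assert (1 - ee t <> 0). { intro E2. apply Hw. replace (ee t) with (1 - (1 - ee t)) by ring. rewrite E2. ring. }
   apply (Cmult_neq_0 _ _ Z H). exact E.
Qed.
Open Scope C_scope.

Definition th N j := (2 * PI * INR j / INR N)%R.
Definition zeta (rho : R) N j : C := RtoC rho * ee (th N j).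
Definition PK (c : nat -> C) K (z : C) := csum (fun m => c m * z ^ m) K.
Definition TT (t : nat -> C) K (x : R) := csum (fun k => t k * ee (- (INR k * x))) K.

Lemma RtoC_pow' (x : R) n : RtoC (x ^ n) = (RtoC x) ^ n.
Proof. induction n; simpl. reflexivity. rewrite <- IHn. apply Ceq; simpl; ring. Qed.

Lemma zeta_pow rho N j m : zeta rho N j ^ m = RtoC (rho ^ m) * ee (INR m * th N j).
Proof. unfold zeta. rewrite Cpow_mult_l, ee_pow, RtoC_pow'. reflexivity. Qed.

Lemma zeta_conj_pow rho N j m : Cconj (zeta rho N j) ^ m = RtoC (rho ^ m) * ee (- (INR m * th N j)).
Proof. unfold zeta. rewrite Cmult_conj, ee_conj, Cpow_mult_l, ee_pow, RtoC_pow'.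
 replace (Cconj (RtoC rho)) with (RtoC rho) by (apply Ceq; simpl; ring). repeat f_equal. ring. Qed.

Lemma core1 c t rho N K : (0 < N)%nat -> (K <= N)%nat ->
  csum (fun j => PK c K (zeta rho N j) * TT t K (th N j)) N =
  RtoC (INR N) * csum (fun k => c k * RtoC (rho ^ k) * t k) K.
Proof. intros HN HK. assert (HN' : (0 < INR N)%R) by (apply lt_0_INR; lia).
 unfold PK, TT.
 rewrite (csum_ext _ (fun j => csum (fun m => csum (fun k => (c m * RtoC (rho ^ m) * t k) *
     ee (INR j * (2 * PI * (INR m - INR k) / INR N))) K) K)).
 2:{ intros j Hj. rewrite csum_mult. apply csum_ext; intros m Hm. apply csum_ext; intros k Hk.
     rewrite zeta_pow. 
     replace (INR j * (2 * PI * (INR m - INR k) / INR N))%R with (INR m * th N j + - (INR k * th N j))%R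
       by (unfold th; field; lra).
     rewrite <- ee_mult. ring. }
 rewrite csum_swap.
 rewrite (csum_ext _ (fun m => c m * RtoC (rho ^ m) * t m * RtoC (INR N))).
 2:{ intros m Hm. rewrite csum_swap.
     rewrite (csum_ext _ (fun k => if Nat.eqb k m then c m * RtoC (rho ^ m) * t m * RtoC (INR N) else 0)).
     - rewrite csum_delta. destruct (Nat.ltb_spec m K); [reflexivity| lia].
     - intros k Hk. rewrite csum_scal, roots_sum by lia.
       destruct (Nat.eqb_spec m k); destruct (Nat.eqb_spec k m); subst; try lia; ring. }
 rewrite csum_scal_r. ring.
Qed.

Lemma core2 c t rho N K : (0 < K)%nat -> (2 * K <= N)%nat ->
  csum (fun j => Cconj (PK c K (zeta rho N j)) * TT t K (th N j)) N =
  RtoC (INR N) * (Cconj (c 0%nat) * t 0%nat).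
Proof. intros HK HKN. assert (HN' : (0 < INR N)%R) by (apply lt_0_INR; lia).
 unfold PK, TT.
 rewrite (csum_ext _ (fun j => csum (fun m => csum (fun k => (Cconj (c m) * RtoC (rho ^ m) * t k) *
     ee (INR j * (2 * PI * (INR 0 - INR (m + k)) / INR N))) K) K)).
 2:{ intros j Hj. rewrite csum_conj, csum_mult. apply csum_ext; intros m Hm. apply csum_ext; intros k Hk.
     rewrite Cmult_conj, Cpow_conj, zeta_conj_pow.
     replace (INR j * (2 * PI * (INR 0 - INR (m + k)) / INR N))%R with (- (INR m * th N j) + - (INR k * th N j))%R
       by (unfold th; rewrite plus_INR; simpl; field; lra).
     rewrite <- ee_mult. ring. }
 rewrite csum_swap.
 rewrite (csum_ext _ (fun m => if Nat.eqb m 0 then Cconj (c 0%nat) * RtoC (rho ^ 0) * t 0%nat * RtoC (INR N) else 0)).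
 2:{ intros m Hm. rewrite csum_swap.
     rewrite (csum_ext _ (fun k => if Nat.eqb k 0 then (if Nat.eqb m 0 then Cconj (c 0%nat) * RtoC (rho ^ 0) * t 0%nat * RtoC (INR N) else 0) else 0)).
     - rewrite csum_delta. destruct (Nat.ltb_spec 0 K); [reflexivity| lia].
     - intros k Hk. rewrite csum_scal, roots_sum by lia.
       destruct (Nat.eqb_spec 0 (m + k)); destruct (Nat.eqb_spec k 0); destruct (Nat.eqb_spec m 0); subst; try lia; simpl; ring. }
 rewrite csum_delta. destruct (Nat.ltb_spec 0 K); [|lia]. simpl. ring.
Qed.
Open Scope C_scope.

Definition conv (c : nat -> C) (z l : C) : Prop :=
  forall eps : R, (0 < eps)%R -> exists N, forall n, (N <= n)%nat -> (Cmod (PK c n z - l) < eps)%R.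

Lemma csum_extend (f : nat -> C) M K : (M <= K)%nat -> (forall k, (M <= k)%nat -> (k < K)%nat -> f k = 0) ->
  csum f K = csum f M.
Proof. intros HMK H. induction K. assert (M = 0%nat) by lia. subst; reflexivity.
 destruct (Nat.eq_dec M (S K)). subst; reflexivity.
 cbn [csum]. rewrite IHK by (try lia; intros; apply H; lia). rewrite H by lia. ring. Qed.

Lemma rsum_nonneg f n : (forall i, 0 <= f i)%R -> (0 <= rsum f n)%R.
Proof. intros H; induction n; simpl. lra. specialize (H n). lra. Qed.

Lemma rsum_ge_term f n k : (forall i, 0 <= f i)%R -> (k < n)%nat -> (f k <= rsum f n)%R.
Proof. intros H. induction n; intros Hk. lia. simpl. destruct (Nat.eq_dec k n). subst.
 assert (0 <= rsum f n)%R by (apply rsum_nonneg; auto). lra.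
 assert (f k <= rsum f n)%R by (apply IHn; lia). specialize (H n). lra. Qed.

Lemma le_eps (x y : R) : (forall eps, 0 < eps -> x < y + eps)%R -> (x <= y)%R.
Proof. intros H. destruct (Rle_or_lt x y); auto. specialize (H ((x - y)/2)%R ltac:(lra)). lra. Qed.

Lemma Cmod_sub_tri (a b d : C) : (Cmod (a - b) <= Cmod (a - d) + Cmod (d - b))%R.
Proof. replace (a - b) with ((a - d) + (d - b)) by ring. apply Cmod_triangle. Qed.

Lemma Cmod_sub_sym (a b : C) : Cmod (a - b) = Cmod (b - a).
Proof. replace (a - b) with (- (b - a)) by ring. apply Cmod_opp. Qed.

Lemma PK_S c n z : PK c (S n) z = PK c n z + c n * z ^ n.
Proof. reflexivity. Qed.

Lemma abel c z l : conv c z l -> exists B, (0 <= B)%R /\ forall m, (Cmod (c m * z ^ m) <= B)%R.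
Proof. intros H. destruct (H 1%R ltac:(lra)) as [N HN].
 exists (2 + rsum (fun k => Cmod (c k * z ^ k)) N)%R.
 assert (R0 : (0 <= rsum (fun k => Cmod (c k * z ^ k)) N)%R) by (apply rsum_nonneg; intros; apply Cmod_ge_0).
 split. lra. intros m. destruct (Nat.lt_ge_cases m N).
 - assert (Cmod (c m * z ^ m) <= rsum (fun k => Cmod (c k * z ^ k)) N)%R
     by (apply (rsum_ge_term (fun k => Cmod (c k * z ^ k))); auto; intros; apply Cmod_ge_0). lra.
 - replace (c m * z ^ m) with (PK c (S m) z - l - (PK c m z - l)) by (rewrite PK_S; ring).
   eapply Rle_trans. apply (Cmod_sub_tri _ _ 0). replace (PK c (S m) z - l - 0) with (PK c (S m) z - l) by ring.
   replace (0 - (PK c m z - l)) with (- (PK c m z - l)) by ring. rewrite Cmod_opp.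
   pose proof (HN (S m) ltac:(lia)). pose proof (HN m ltac:(lia)). lra.
Qed.

Lemma tail c z l B q K : conv c z l -> (0 <= q < 1)%R -> (0 <= B)%R ->
  (forall m, Cmod (c m * z ^ m) <= B * q ^ m)%R ->
  (Cmod (l - PK c K z) <= B * q ^ K / (1 - q))%R.
Proof. intros Hc Hq HB Hm.
 assert (D : forall d, (Cmod (PK c (K + d) z - PK c K z) <= B * q ^ K * (1 - q ^ d) / (1 - q))%R).
 { induction d. rewrite Nat.add_0_r. replace (PK c K z - PK c K z) with (RtoC 0) by ring. rewrite Cmod_0.
   simpl. replace (B * q ^ K * (1 - 1) / (1 - q))%R with 0%R by (field; lra). lra.
   rewrite Nat.add_succ_r, PK_S.
   replace (PK c (K + d) z + c (K + d)%nat * z ^ (K + d) - PK c K z) with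
     ((PK c (K + d) z - PK c K z) + c (K + d)%nat * z ^ (K + d)) by ring.
   eapply Rle_trans. apply Cmod_triangle. specialize (Hm (K + d)%nat). rewrite pow_add in Hm.
   apply Rle_trans with (B * q ^ K * (1 - q ^ d) / (1 - q) + B * (q ^ K * q ^ d))%R. lra.
   right. simpl. field. lra. }
 apply le_eps. intros eps Heps. destruct (Hc eps Heps) as [N HN].
 specialize (HN (K + N)%nat ltac:(lia)). specialize (D N).
 eapply Rle_lt_trans. apply (Cmod_sub_tri _ _ (PK c (K + N) z)). rewrite Cmod_sub_sym in HN.
 assert (B * q ^ K * (1 - q ^ N) / (1 - q) <= B * q ^ K / (1 - q))%R.
 { unfold Rdiv. apply Rmult_le_compat_r. apply Rlt_le, Rinv_0_lt_compat; lra.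
   assert (0 <= q ^ N)%R by (apply pow_le; lra). assert (0 <= B * q ^ K)%R by (apply Rmult_le_pos; auto; apply pow_le; lra). nra. }
 lra.
Qed.

Lemma Rabs_le_inv (x a : R) : (Rabs x <= a -> - a <= x <= a)%R.
Proof. unfold Rabs; destruct (Rcase_abs x); lra. Qed.

Lemma Re_minus (a b : C) : Re (a - b) = (Re a - Re b)%R.
Proof. destruct a, b; simpl; ring. Qed.

Lemma Re_prod2 (a b : C) : Re (a * b + Cconj a * b) = (2 * Re a * Re b)%R.
Proof. destruct a, b; simpl; ring. Qed.

Lemma Re_RtoC_mult (x : R) (a : C) : Re (RtoC x * a) = (x * Re a)%R.
Proof. destruct a; simpl; ring. Qed.

Lemma Cmod_zeta rho N j : (0 <= rho)%R -> Cmod (zeta rho N j) = rho.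
Proof. intros. unfold zeta. rewrite Cmod_mult, Cmod_R, Cmod_ee, Rabs_pos_eq; lra. Qed.

Lemma Cmod_TT t M x : (Cmod (TT t M x) <= rsum (fun k => Cmod (t k)) M)%R.
Proof. unfold TT. eapply Rle_trans. apply Cmod_csum. apply rsum_le. intros k _.
 rewrite Cmod_mult, Cmod_ee. lra. Qed.

Lemma Re_le_Cmod (a : C) : (Rabs (Re a) <= Cmod a)%R.
Proof. apply re_le_Cmod. Qed.

Definition Vval (c t : nat -> C) M rho := csum (fun k => c k * RtoC (rho ^ k) * t k) M + Cconj (c 0%nat) * t 0%nat.

Lemma KL (c t : nat -> C) (M : nat) (rho : R) :
  (0 < M)%nat -> (forall k, (M <= k)%nat -> t k = 0) -> (forall x, 0 <= Re (TT t M x))%R ->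
  (0 < rho < 1)%R ->
  (forall z, Cmod z < 1 -> exists l, conv c z l /\ 0 <= Re l)%R ->
  (0 <= Re (Vval c t M rho))%R.
Proof. unfold Vval.
 intros HM Ht HT Hr Hpos.
 set (rho' := ((1 + rho) / 2)%R).
 destruct (Hpos (RtoC rho')) as [l' [Hl' _]]. { rewrite Cmod_R, Rabs_pos_eq; unfold rho'; lra. }
 destruct (abel _ _ _ Hl') as [B [HB HBm]].
 set (q := (rho / rho')%R).
 assert (Hq : (0 <= q < 1)%R). { unfold q, rho'. split. apply Rdiv_le_0_compat; lra.
   apply (Rmult_lt_reg_r ((1 + rho) / 2)); [lra|]. unfold Rdiv. rewrite Rmult_assoc, Rinv_l; lra. }
 assert (Hm : forall z, Cmod z = rho -> forall m, (Cmod (c m * z ^ m) <= B * q ^ m)%R).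
 { intros z Hz m. specialize (HBm m). rewrite Cmod_mult, Cmod_pow, Hz.
   rewrite Cmod_mult, Cmod_pow, Cmod_R, Rabs_pos_eq in HBm by (unfold rho'; lra).
   replace rho with (rho' * q)%R by (unfold q, rho'; field; lra). rewrite Rpow_mult_distr.
   assert (0 <= q ^ m)%R by (apply pow_le; lra).
   replace (Cmod (c m) * (rho' ^ m * q ^ m))%R with ((Cmod (c m) * rho' ^ m) * q ^ m)%R by ring.
   apply Rmult_le_compat_r; auto. }
 set (S := rsum (fun k => Cmod (t k)) M).
 set (V := (csum (fun k => c k * RtoC (rho ^ k) * t k) M + Cconj (c 0%nat) * t 0%nat)).
 assert (HS : (0 <= S)%R) by (apply rsum_nonneg; intros; apply Cmod_ge_0).
 assert (Main : forall K, (M <= K)%nat -> (- (2 * (B * q ^ K / (1 - q)) * S) <= Re V)%R).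
 { intros K HK. set (N := (2 * K)%nat). set (E := (B * q ^ K / (1 - q))%R).
   assert (HE : (0 <= E)%R). { unfold E. apply Rdiv_le_0_compat; [|lra]. apply Rmult_le_pos; auto. apply pow_le; lra. }
   assert (HN : (0 < N)%nat) by (unfold N; lia).
   assert (HNr : (0 < INR N)%R) by (apply lt_0_INR; lia).
   set (f := fun j => PK c K (zeta rho N j) * TT t K (th N j) + Cconj (PK c K (zeta rho N j)) * TT t K (th N j)).
   assert (Hsum : csum f N = RtoC (INR N) * V).
   { unfold f. rewrite csum_plus, core1, core2 by (unfold N; lia). unfold V.
     rewrite (csum_extend _ M K) by (auto; intros; rewrite Ht by lia; ring). ring. }
   assert (Hf : forall j, (j < N)%nat -> (- (2 * E * S) <= Re (f j))%R).
   { intros j Hj. unfold f. rewrite Re_prod2.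
     assert (TTe : TT t K (th N j) = TT t M (th N j)).
     { unfold TT. apply csum_extend; auto. intros; rewrite Ht by lia; ring. }
     rewrite TTe.
     destruct (Hpos (zeta rho N j)) as [l [Hl Hlpos]]. { rewrite Cmod_zeta; lra. }
     assert (Ht1 := tail _ _ _ _ _ K Hl Hq HB (Hm _ (Cmod_zeta rho N j ltac:(lra)))).
     fold E in Ht1.
     assert (A1 := Re_le_Cmod (l - PK c K (zeta rho N j))).
     assert (A2 := Re_le_Cmod (TT t M (th N j))). assert (A3 := Cmod_TT t M (th N j)). fold S in A3.
     assert (A4 := HT (th N j)).
     rewrite Re_minus in A1.
     set (pr := Re (PK c K (zeta rho N j))) in *. set (tr := Re (TT t M (th N j))) in *. apply Rabs_le_inv in A2.
     assert (Hpr : (Re l - E <= pr)%R). { apply Rabs_le_inv in A1. lra. } clear A1.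
     assert ((Re l - E) * tr <= pr * tr)%R by (apply Rmult_le_compat_r; lra).
     assert (0 <= Re l * tr)%R by (apply Rmult_le_pos; lra).
     assert (E * tr <= E * S)%R by (apply Rmult_le_compat_l; lra). nra. }
   assert (R1 := csum_Re_ge f N _ Hf). rewrite Hsum, Re_RtoC_mult in R1.
   assert (- (2 * E * S) <= Re V)%R.
   { apply (Rmult_le_reg_l (INR N)); auto; lra. } unfold E in *; lra. }
 apply le_eps. intros eps Heps.
 destruct (Rle_lt_dec B 0).
 - assert (B = 0%R) by lra. specialize (Main M (le_n M)). rewrite H in Main.
   replace (- (2 * (0 * q ^ M / (1 - q)) * S))%R with 0%R in Main by (field; lra). lra.
 - assert (HS1 : (0 < S + 1)%R) by lra.
   destruct (pow_lt_1_zero q ltac:(rewrite Rabs_pos_eq; lra) (eps * (1 - q) / (2 * B * (S + 1)))) as [K0 HK0].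
   { apply Rdiv_lt_0_compat. nra. nra. }
   specialize (HK0 (M + K0)%nat ltac:(lia)). specialize (Main (M + K0)%nat ltac:(lia)).
   rewrite Rabs_pos_eq in HK0 by (apply pow_le; lra).
   set (Q := (q ^ (M + K0))%R) in *.
   assert (0 <= Q)%R by (apply pow_le; lra).
   assert (2 * (B * Q / (1 - q)) * S < eps)%R.
   { replace (2 * (B * Q / (1 - q)) * S)%R with (Q * (2 * B * S / (1 - q)))%R by (field; lra).
     apply Rle_lt_trans with (eps * (1 - q) / (2 * B * (S + 1)) * (2 * B * S / (1 - q)))%R.
     apply Rmult_le_compat_r. apply Rdiv_le_0_compat; nra. lra.
     replace (eps * (1 - q) / (2 * B * (S + 1)) * (2 * B * S / (1 - q)))%R with (eps * (S / (S + 1)))%R by (field; lra).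
     assert (S / (S + 1) < 1)%R. { apply (Rmult_lt_reg_r (S+1)); auto. unfold Rdiv. rewrite Rmult_assoc, Rinv_l; lra. }
     nra. }
   lra.
Qed.
Open Scope C_scope.

Definition Hposc (c : nat -> C) : Prop :=
  (forall z, Cmod z < 1 -> exists l, conv c z l /\ 0 <= Re l)%R.

Lemma bernoulli d k : (0 <= d <= 1)%R -> (1 - INR k * d <= (1 - d) ^ k)%R.
Proof. intros H. induction k. simpl; lra. rewrite S_INR. simpl.
 assert (0 <= (1 - d) ^ k)%R by (apply pow_le; lra). pose proof (pos_INR k). nra. Qed.

Lemma le_lim (X Y K d : R) : (0 < d)%R -> (0 <= K)%R ->
  (forall del, 0 < del < d -> X <= Y + K * del)%R -> (X <= Y)%R.
Proof. intros Hd HK H. destruct (Rle_or_lt X Y); auto. exfalso.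
 set (del := Rmin (d / 2) ((X - Y) / (2 * (K + 1)))).
 assert (H1 : (0 < del)%R). { unfold del. apply Rmin_glb_lt. lra. apply Rdiv_lt_0_compat; lra. }
 assert (H2 : (del < d)%R). { unfold del. eapply Rle_lt_trans. apply Rmin_l. lra. }
 assert (H3 : (del <= (X - Y) / (2 * (K + 1)))%R) by apply Rmin_r.
 specialize (H del (conj H1 H2)).
 assert (K * del <= (K + 1) * ((X - Y) / (2 * (K + 1))))%R.
 { apply Rmult_le_compat; lra. }
 replace ((K + 1) * ((X - Y) / (2 * (K + 1))))%R with ((X - Y) / 2)%R in H4 by (field; lra). lra. Qed.

Lemma csum_two (f : nat -> C) k : (0 < k)%nat -> (forall n, (0 < n)%nat -> (n < k)%nat -> f n = 0) ->
  csum f (S k) = f 0%nat + f k.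
Proof. intros Hk H. cbn [csum]. rewrite (csum_extend f 1 k) by (auto; intros; apply H; lia).
 simpl. ring. Qed.

Lemma Re_ge_negmod (a : C) : (- Cmod a <= Re a)%R.
Proof. pose proof (Re_le_Cmod a). apply Rabs_le_inv in H. lra. Qed.

Lemma coef_bound (c : nat -> C) k : c 0%nat = 1 -> Hposc c -> (0 < k)%nat -> (Cmod (c k) <= 2)%R.
Proof. intros H0 Hp Hk.
 assert (Hr : forall rho, (0 < rho < 1)%R -> (Cmod (c k) * rho ^ k <= 2)%R).
 { intros rho Hr. destruct (Ceq_dec (c k) 0) as [Z|Z].
   { rewrite Z, Cmod_0. lra. }
   assert (Hm : (0 < Cmod (c k))%R) by (apply Cmod_gt_0; auto).
   set (s := - Cconj (c k) * RtoC (/ Cmod (c k))).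
   assert (Hs : Cmod s = 1%R).
   { unfold s. rewrite Cmod_mult, Cmod_opp, Cmod_conj, Cmod_R, Rabs_pos_eq. field; lra. left; apply Rinv_0_lt_compat; auto. }
   set (t := fun n => if Nat.eqb n 0 then RtoC 1 else if Nat.eqb n k then s else 0).
   assert (K := KL c t (S k) rho ltac:(lia)).
   assert (T1 : t 0%nat = 1) by reflexivity.
   assert (T2 : t k = s) by (unfold t; destruct (Nat.eqb_spec k 0); [lia|]; rewrite Nat.eqb_refl; reflexivity).
   assert (T3 : forall n, (0 < n)%nat -> (n <> k)%nat -> t n = 0).
   { intros n Hn Hnk. unfold t. destruct (Nat.eqb_spec n 0); [lia|]. destruct (Nat.eqb_spec n k); [lia|]. reflexivity. }
   assert (0 <= Re (Vval c t (S k) rho))%R.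
   { apply K; auto.
     - intros n Hn. apply T3; lia.
     - intros x. unfold TT. rewrite csum_two by (auto; intros; rewrite T3 by lia; ring).
       rewrite T1, T2. simpl (INR 0). rewrite Rmult_0_l, Ropp_0.
       unfold ee at 1. rewrite cos_0, sin_0. rewrite Re_plus.
       assert (A1 := Re_ge_negmod (s * ee (- (INR k * x)))). rewrite Cmod_mult, Hs, Cmod_ee in A1.
       simpl (Re (1 * (1, 0))). lra. }
   unfold Vval in H. rewrite csum_two in H by (auto; intros; rewrite T3 by lia; ring).
   rewrite T1, T2, H0 in H.
   replace (1 * RtoC (rho ^ 0) * 1 + c k * RtoC (rho ^ k) * s + Cconj 1 * 1) with
     (2 - RtoC (rho ^ k * Cmod (c k))) in H.
   - rewrite Re_minus in H. simpl in H. lra.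
   - unfold s. replace (c k * RtoC (rho ^ k) * (- Cconj (c k) * RtoC (/ Cmod (c k)))) with
      (- (RtoC (rho ^ k) * (c k * Cconj (c k)) * RtoC (/ Cmod (c k)))) by ring.
     rewrite <- Cmod2_conj. apply Ceq; simpl; field; lra. }
 apply (le_lim _ 2 (Cmod (c k) * INR k) 1); [lra| apply Rmult_le_pos; [apply Cmod_ge_0|apply pos_INR]|].
 intros del Hd. specialize (Hr (1 - del)%R ltac:(lra)).
 assert (B := bernoulli del k ltac:(lra)).
 assert (Cmod (c k) * (1 - INR k * del) <= Cmod (c k) * (1 - del) ^ k)%R by (apply Rmult_le_compat_l; [apply Cmod_ge_0|lra]).
 nra.
Qed.
Open Scope C_scope.

Lemma one_minus_ne (y : C) : (Cmod y < 1)%R -> 1 - y <> 0.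
Proof. intros H E. assert (y = 1) by (replace y with (1 - (1 - y)) by ring; rewrite E; ring).
 subst. rewrite Cmod_1 in H. lra. Qed.

Lemma Cmod_1my (y : C) : (1 - Cmod y <= Cmod (1 - y))%R.
Proof. assert (H := Cmod_triangle (1 - y) y). replace (1 - y + y) with (RtoC 1) in H by ring.
 rewrite Cmod_1 in H. lra. Qed.

Lemma Cmod_1py (y : C) : (Cmod (1 + y) <= 1 + Cmod y)%R.
Proof. eapply Rle_trans. apply Cmod_triangle. rewrite Cmod_1. lra. Qed.

Lemma ReW_ge (y : C) : (Cmod y < 1)%R -> ((1 - Cmod y) / (1 + Cmod y) <= Re ((1 + y) / (1 - y)))%R.
Proof. intros H. assert (Hne := one_minus_ne y H). set (s := Cmod y) in *.
 assert (Hs2 : (s ^ 2 = Re y ^ 2 + Im y ^ 2)%R) by (unfold s; apply Cmod2_alt).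
 assert (Hs0 : (0 <= s)%R) by apply Cmod_ge_0.
 assert (Ha : (Rabs (Re y) <= s)%R) by apply re_le_Cmod. apply Rabs_le_inv in Ha.
 destruct y as [a b]. simpl in Hs2, Ha.
 assert (HD : ((1 - a) ^ 2 + b ^ 2 > 0)%R) by nra.
 assert (E : Re ((1 + (a, b)) / (1 - (a, b))) = ((1 - a^2 - b^2) / ((1 - a) ^ 2 + b ^ 2))%R).
 { unfold Cdiv, Cmult, Cinv, Cplus, Cminus, Copp; simpl. field. nra. }
 rewrite E. cut (0 <= (1 - a^2 - b^2) / ((1 - a) ^ 2 + b ^ 2) - (1 - s) / (1 + s))%R. lra.
 replace ((1 - a^2 - b^2) / ((1 - a) ^ 2 + b ^ 2) - (1 - s) / (1 + s))%R with
   ((1 - s) * ((1 + s) ^ 2 - ((1 - a) ^ 2 + b ^ 2)) / (((1 - a) ^ 2 + b ^ 2) * (1 + s)))%R.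
 - apply Rdiv_le_0_compat. apply Rmult_le_pos; nra. nra.
 - assert (Hb : (b ^ 2 = s ^ 2 - a ^ 2)%R) by (simpl in *; nra). rewrite !Hb. field. split; nra.
Qed.

Definition TL (x : C) L th := -1 + 2 * csum (fun n => (x * ee (- th)) ^ n) L.

Lemma TL_split x L th : (Cmod x < 1)%R ->
  TL x L th = (1 + x * ee (- th)) / (1 - x * ee (- th)) - 2 * (x * ee (- th)) ^ L / (1 - x * ee (- th)).
Proof. intros H. set (y := x * ee (- th)).
 assert (Hy : (Cmod y < 1)%R) by (unfold y; rewrite Cmod_mult, Cmod_ee; lra).
 assert (Hne := one_minus_ne y Hy). unfold TL. fold y.
 assert (G := csum_geom y L).
 replace (csum (fun n => y ^ n) L) with ((1 - y ^ L) / (1 - y)).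
 - field. auto.
 - rewrite <- G. field. auto.
Qed.

Lemma bound_R (y : C) L : (Cmod y < 1)%R ->
  (Cmod (2 * y ^ L / (1 - y)) <= 2 * Cmod y ^ L / (1 - Cmod y))%R.
Proof. intros H. assert (Hne := one_minus_ne y H).
 rewrite Cmod_div by auto. rewrite Cmod_mult, Cmod_pow, Cmod_R, Rabs_pos_eq by lra.
 assert (A := Cmod_1my y). assert (0 <= Cmod y ^ L)%R by (apply pow_le, Cmod_ge_0).
 unfold Rdiv. apply Rmult_le_compat_l. lra. apply Rinv_le_contravar; lra. Qed.

Lemma TL_re x L th : (Cmod x < 1)%R ->
  ((1 - Cmod x) / (1 + Cmod x) - 2 * Cmod x ^ L / (1 - Cmod x) <= Re (TL x L th))%R.
Proof. intros H. rewrite TL_split by auto. set (y := x * ee (- th)).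
 assert (Hy : Cmod y = Cmod x) by (unfold y; rewrite Cmod_mult, Cmod_ee; lra).
 rewrite Re_minus. rewrite <- Hy in *.
 assert (A := ReW_ge y H). assert (B := bound_R y L H).
 assert (C0 := Re_le_Cmod (2 * y ^ L / (1 - y))). apply Rabs_le_inv in C0. lra. Qed.

Lemma TL_mod x L th : (Cmod x < 1)%R ->
  (Cmod (TL x L th) <= (1 + Cmod x) / (1 - Cmod x) + 2 * Cmod x ^ L / (1 - Cmod x))%R.
Proof. intros H. rewrite TL_split by auto. set (y := x * ee (- th)).
 assert (Hy : Cmod y = Cmod x) by (unfold y; rewrite Cmod_mult, Cmod_ee; lra).
 rewrite <- Hy in *. assert (B := bound_R y L H). assert (Hne := one_minus_ne y H).
 assert (Tm : forall a b : C, (Cmod (a - b) <= Cmod a + Cmod b)%R).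
 { intros a b. unfold Cminus. eapply Rle_trans. apply Cmod_triangle. rewrite Cmod_opp. lra. }
 eapply Rle_trans. apply Tm.
 assert (Cmod ((1 + y) / (1 - y)) <= (1 + Cmod y) / (1 - Cmod y))%R.
 { rewrite Cmod_div by auto. assert (A1 := Cmod_1my y). assert (A2 := Cmod_1py y).
   unfold Rdiv. apply Rmult_le_compat; try lra. apply Cmod_ge_0. apply Rlt_le, Rinv_0_lt_compat.
   apply Rlt_le_trans with (1 - Cmod y)%R; lra. apply Rinv_le_contravar; lra. }
 lra. Qed.
Open Scope C_scope.

Lemma ee0 : ee 0 = 1.
Proof. unfold ee. rewrite cos_0, sin_0. reflexivity. Qed.

Lemma csum_delta0 (v : C) L : (0 < L)%nat -> csum (fun n => if Nat.eqb n 0 then v else 0) L = v.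
Proof. intros H. rewrite (csum_delta (fun _ => v) 0 L). destruct (Nat.ltb_spec 0 L); [reflexivity|lia]. Qed.

Lemma E2 (c : nat -> C) (rho A : R) (lam x : C) L : c 0%nat = 1 -> Hposc c -> (0 < rho < 1)%R -> (0 < L)%nat ->
  (forall th, 0 <= A + Re (lam * TL x L th))%R -> (0 <= A + Re (lam * PK c L (RtoC rho * x)))%R.
Proof. intros H0 Hp Hr HL HT.
 set (t := fun n => if Nat.ltb n L then 2 * lam * x ^ n + (if Nat.eqb n 0 then RtoC A - lam else 0) else 0).
 assert (K := KL c t L rho HL).
 assert (Tz : forall k, (L <= k)%nat -> t k = 0).
 { intros k Hk. unfold t. destruct (Nat.ltb_spec k L); [lia|reflexivity]. }
 assert (TTe : forall th, TT t L th = RtoC A + lam * TL x L th).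
 { intros th. unfold TT, TL.
   rewrite (csum_ext _ (fun n => 2 * lam * (x * ee (- th)) ^ n + (if Nat.eqb n 0 then RtoC A - lam else 0))).
   - rewrite csum_plus, csum_scal, csum_delta0 by auto. replace (csum (Cpow (x * ee (- th))) L) with (csum (fun n => (x * ee (- th)) ^ n) L) by reflexivity. ring.
   - intros n Hn. unfold t. destruct (Nat.ltb_spec n L); [|lia].
     rewrite Cpow_mult_l, ee_pow. destruct (Nat.eqb_spec n 0).
     + subst. simpl (INR 0). rewrite !Rmult_0_l, Ropp_0, ee0. ring.
     + replace (INR n * - th)%R with (- (INR n * th))%R by ring. ring. }
 assert (Vv : Vval c t L rho = 2 * lam * PK c L (RtoC rho * x) + RtoC (2 * A)).
 { unfold Vval, PK.
   rewrite (csum_ext _ (fun n => 2 * lam * (c n * (RtoC rho * x) ^ n) + (if Nat.eqb n 0 then RtoC A - lam else 0))).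
   - rewrite csum_plus, csum_scal, csum_delta0 by auto.
     unfold t. destruct (Nat.ltb_spec 0 L); [|lia]. simpl Nat.eqb. rewrite H0.
     apply Ceq; simpl; ring.
   - intros n Hn. unfold t. destruct (Nat.ltb_spec n L); [|lia].
     rewrite Cpow_mult_l, <- RtoC_pow'. destruct (Nat.eqb_spec n 0).
     + subst. rewrite H0. simpl. ring.
     + ring. }
 assert (0 <= Re (Vval c t L rho))%R.
 { apply K; auto. intros th. rewrite TTe, Re_plus. simpl (Re (RtoC A)). apply HT. }
 rewrite Vv, Re_plus in H. simpl (Re (RtoC (2 * A))) in H.
 replace (Re (2 * lam * PK c L (RtoC rho * x))) with (2 * Re (lam * PK c L (RtoC rho * x)))%R in H.
 lra. set (P := lam * PK c L (RtoC rho * x)). replace (2 * lam * PK c L (RtoC rho * x)) with (2 * P) by (unfold P; ring).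
 destruct P; simpl; ring.
Qed.
Open Scope C_scope.

Lemma lim_helper (c : nat -> C) z l lam B0 s : conv c z l -> (Cmod lam <= 1)%R -> (0 <= s < 1)%R ->
  (forall L, (0 < L)%nat -> B0 - 2 * s ^ L / (1 - s) <= Re (lam * PK c L z))%R -> (B0 <= Re (lam * l))%R.
Proof. intros Hc Hl Hs H. apply le_eps. intros eps He.
 destruct (Hc (eps / 2)%R ltac:(lra)) as [N1 HN1].
 destruct (pow_lt_1_zero s ltac:(rewrite Rabs_pos_eq; lra) (eps * (1 - s) / 4)%R) as [N2 HN2].
 { apply Rdiv_lt_0_compat; nra. }
 set (L := S (N1 + N2)). specialize (H L ltac:(unfold L; lia)).
 specialize (HN1 L ltac:(unfold L; lia)). specialize (HN2 L ltac:(unfold L; lia)).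
 rewrite Rabs_pos_eq in HN2 by (apply pow_le; lra).
 assert (E1 : (2 * s ^ L / (1 - s) < eps / 2)%R).
 { apply (Rmult_lt_reg_r (1 - s)); [lra|]. unfold Rdiv. rewrite Rmult_assoc, Rinv_l by lra. nra. }
 assert (E2 : (Re (lam * PK c L z) - Re (lam * l) < eps / 2)%R).
 { rewrite <- Re_minus. replace (lam * PK c L z - lam * l) with (lam * (PK c L z - l)) by ring.
   eapply Rle_lt_trans. eapply Rle_trans. apply Rle_abs. apply Re_le_Cmod.
   rewrite Cmod_mult. apply Rle_lt_trans with (1 * Cmod (PK c L z - l))%R.
   apply Rmult_le_compat_r; auto. apply Cmod_ge_0. lra. }
 lra. Qed.

Lemma harnack_rho (c : nat -> C) z l rho : c 0%nat = 1 -> Hposc c -> conv c z l -> (Cmod z < rho < 1)%R ->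
  ((1 - Cmod z / rho) / (1 + Cmod z / rho) <= Re l)%R.
Proof. intros H0 Hp Hc Hr. assert (Hrho : (0 < rho)%R) by (pose proof (Cmod_ge_0 z); lra).
 set (x := z * RtoC (/ rho)).
 assert (Hx : Cmod x = (Cmod z / rho)%R).
 { unfold x. rewrite Cmod_mult, Cmod_R, Rabs_pos_eq. reflexivity. left; apply Rinv_0_lt_compat; auto. }
 assert (Hz : RtoC rho * x = z). { unfold x. rewrite Cmult_comm, <- Cmult_assoc, <- RtoC_mult, Rinv_l by lra. ring. }
 set (s := (Cmod z / rho)%R) in *.
 assert (Hs : (0 <= s < 1)%R). { unfold s. split. apply Rdiv_le_0_compat; [apply Cmod_ge_0|lra].
   apply (Rmult_lt_reg_r rho); auto. unfold Rdiv. rewrite Rmult_assoc, Rinv_l; lra. }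
 replace (Re l) with (Re (1 * l)) by (f_equal; ring).
 apply (lim_helper c z l 1 _ s Hc); [rewrite Cmod_1; lra| auto |].
 intros L HL. rewrite <- Hz.
 assert (K := E2 c rho (- ((1 - s) / (1 + s)) + 2 * s ^ L / (1 - s)) 1 x L H0 Hp ltac:(lra) HL).
 rewrite Cmult_1_l in K |- *. cut (0 <= - ((1 - s) / (1 + s)) + 2 * s ^ L / (1 - s) + Re (PK c L (RtoC rho * x)))%R. lra.
 apply K. intros th. rewrite Cmult_1_l. assert (T := TL_re x L th ltac:(lra)). rewrite Hx in T. lra.
Qed.

Lemma mod_rho (c : nat -> C) z l rho : c 0%nat = 1 -> Hposc c -> conv c z l -> (Cmod z < rho < 1)%R ->
  (Cmod l <= (1 + Cmod z / rho) / (1 - Cmod z / rho))%R.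
Proof. intros H0 Hp Hc Hr. assert (Hrho : (0 < rho)%R) by (pose proof (Cmod_ge_0 z); lra).
 set (x := z * RtoC (/ rho)).
 assert (Hx : Cmod x = (Cmod z / rho)%R).
 { unfold x. rewrite Cmod_mult, Cmod_R, Rabs_pos_eq. reflexivity. left; apply Rinv_0_lt_compat; auto. }
 assert (Hz : RtoC rho * x = z). { unfold x. rewrite Cmult_comm, <- Cmult_assoc, <- RtoC_mult, Rinv_l by lra. ring. }
 set (s := (Cmod z / rho)%R) in *.
 assert (Hs : (0 <= s < 1)%R). { unfold s. split. apply Rdiv_le_0_compat; [apply Cmod_ge_0|lra].
   apply (Rmult_lt_reg_r rho); auto. unfold Rdiv. rewrite Rmult_assoc, Rinv_l; lra. }
 destruct (Ceq_dec l 0) as [Z|Z].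
 { rewrite Z, Cmod_0. apply Rdiv_le_0_compat; lra. }
 assert (Hm : (0 < Cmod l)%R) by (apply Cmod_gt_0; auto).
 set (lam := - Cconj l * RtoC (/ Cmod l)).
 assert (Hlam : Cmod lam = 1%R).
 { unfold lam. rewrite Cmod_mult, Cmod_opp, Cmod_conj, Cmod_R, Rabs_pos_eq. field; lra. left; apply Rinv_0_lt_compat; auto. }
 assert (Rl : Re (lam * l) = (- Cmod l)%R).
 { unfold lam. replace (- Cconj l * RtoC (/ Cmod l) * l) with (- ((l * Cconj l) * RtoC (/ Cmod l))) by ring.
   rewrite <- Cmod2_conj. simpl. field. lra. }
 cut (- ((1 + s) / (1 - s)) <= Re (lam * l))%R. lra.
 apply (lim_helper c z l lam _ s Hc); [lra| auto |].
 intros L HL. rewrite <- Hz.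
 assert (K := E2 c rho ((1 + s) / (1 - s) + 2 * s ^ L / (1 - s)) lam x L H0 Hp ltac:(lra) HL).
 cut (0 <= ((1 + s) / (1 - s) + 2 * s ^ L / (1 - s)) + Re (lam * PK c L (RtoC rho * x)))%R. lra.
 apply K. intros th. assert (T := TL_mod x L th ltac:(lra)). rewrite Hx in T.
 assert (A1 := Re_ge_negmod (lam * TL x L th)). rewrite Cmod_mult, Hlam, Rmult_1_l in A1. lra.
Qed.
Open Scope C_scope.

Lemma harnack (c : nat -> C) z l : c 0%nat = 1 -> Hposc c -> conv c z l -> (Cmod z < 1)%R ->
  ((1 - Cmod z) / (1 + Cmod z) <= Re l)%R.
Proof. intros H0 Hp Hc Hz. set (r := Cmod z) in *. assert (Hr : (0 <= r)%R) by apply Cmod_ge_0.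
 apply (le_lim _ (Re l) 2 (1 - r)); [lra|lra|]. intros del Hd.
 assert (K := harnack_rho c z l (1 - del) H0 Hp Hc ltac:(fold r; lra)). fold r in K.
 replace ((1 - r / (1 - del)) / (1 + r / (1 - del)))%R with ((1 - del - r) / (1 - del + r))%R in K by (field; lra).
 cut ((1 - r) / (1 + r) - 2 * del <= (1 - del - r) / (1 - del + r))%R. lra.
 cut (0 <= (1 - del - r) / (1 - del + r) - ((1 - r) / (1 + r) - 2 * del))%R. lra.
 replace ((1 - del - r) / (1 - del + r) - ((1 - r) / (1 + r) - 2 * del))%R with
   ((2 * del * (1 + r) * (1 - del + r) - 2 * r * del) / ((1 + r) * (1 - del + r)))%R by (field; lra).
 apply Rdiv_le_0_compat.
 - assert ((1 + r) * (1 - del + r) >= r)%R by nra. nra.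
 - nra.
Qed.

Lemma modbound (c : nat -> C) z l : c 0%nat = 1 -> Hposc c -> conv c z l -> (Cmod z < 1)%R ->
  (Cmod l <= (1 + Cmod z) / (1 - Cmod z))%R.
Proof. intros H0 Hp Hc Hz. set (r := Cmod z) in *. assert (Hr : (0 <= r)%R) by apply Cmod_ge_0.
 apply (le_lim _ _ (4 / ((1 - r) * (1 - r))) ((1 - r) / 2)); [lra| apply Rdiv_le_0_compat; nra |]. intros del Hd.
 assert (K := mod_rho c z l (1 - del) H0 Hp Hc ltac:(fold r; lra)). fold r in K.
 replace ((1 + r / (1 - del)) / (1 - r / (1 - del)))%R with ((1 - del + r) / (1 - del - r))%R in K by (field; lra).
 cut ((1 - del + r) / (1 - del - r) <= (1 + r) / (1 - r) + 4 / ((1 - r) * (1 - r)) * del)%R. lra.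
 cut (0 <= (1 + r) / (1 - r) + 4 / ((1 - r) * (1 - r)) * del - (1 - del + r) / (1 - del - r))%R. lra.
 replace ((1 + r) / (1 - r) + 4 / ((1 - r) * (1 - r)) * del - (1 - del + r) / (1 - del - r))%R with
   ((4 * del * (1 - del - r) - 2 * r * del * (1 - r)) / ((1 - r) * (1 - r) * (1 - del - r)))%R by (field; lra).
 apply Rdiv_le_0_compat.
 - assert (2 * (1 - del - r) >= r * (1 - r))%R by nra. nra.
 - apply Rmult_lt_0_compat; nra.
Qed.
Open Scope C_scope.

Lemma sum_n_PK (a : nat -> C) z n : sum_n (fun k => scal (pow_n z k) (a k)) n = PK a (S n) z.
Proof. rewrite sum_n_csum. unfold PK. apply csum_ext. intros k _. rewrite pow_n_Cpow.
 change (scal (z ^ k) (a k)) with ((z ^ k) * a k). ring. Qed.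

Lemma pseries_conv (a : nat -> C) z l : is_pseries a z l -> conv a z l.
Proof. intros H eps He. unfold is_pseries, is_series in H.
 assert (Hp : (0 < eps / sqrt 2)%R) by (apply Rdiv_lt_0_compat; [lra| apply sqrt_lt_R0; lra]).
 destruct (proj1 (@filterlim_locally nat (NormedModule.UniformSpace C_AbsRing C_NormedModule) eventually _
   (sum_n (fun k => scal (pow_n z k) (a k))) l) H (mkposreal _ Hp)) as [N HN]. exists (S N). intros n Hn. destruct n as [|m]; [lia|].
 specialize (HN m ltac:(lia)). apply C_NormedModule_mixin_compat2 in HN. simpl in HN.
 rewrite sum_n_PK in HN. replace (sqrt 2 * (eps / sqrt 2))%R with eps in HN.
 - exact HN.
 - field. apply Rgt_not_eq, sqrt_lt_R0; lra.
Qed.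

Lemma conv_pseries (a : nat -> C) z l : conv a z l -> is_pseries a z l.
Proof. intros H. unfold is_pseries, is_series. apply filterlim_locally. intros eps.
 destruct (H eps (cond_pos eps)) as [N HN]. exists N. intros n Hn.
 apply C_NormedModule_mixin_compat1. rewrite sum_n_PK. apply HN. lia. Qed.
Open Scope C_scope.

Definition cE (a b : nat -> C) (beta : R) (eps : C) (k : nat) : C :=
  (a (S k) + eps * b (S k) - (if Nat.eqb k 0 then RtoC beta else 0)) * RtoC (/ (1 - beta)).

Lemma PK_shift (u : nat -> C) n z : PK (fun k => u (S k)) n z * z = PK u (S n) z - u 0%nat.
Proof. induction n. unfold PK; simpl. ring.
 rewrite PK_S, Cmult_plus_distr_r, IHn, (PK_S u (S n)). simpl. ring. Qed.

Lemma PK_zero (u : nat -> C) n : (0 < n)%nat -> PK u n 0 = u 0%nat.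
Proof. intros H. induction n. lia. destruct n. unfold PK; simpl. ring.
 rewrite PK_S, IHn by lia. simpl. ring. Qed.

Lemma PK_cE (a b : nat -> C) beta eps z n : (beta < 1)%R ->
  PK (cE a b beta eps) n z * RtoC (1 - beta) =
  PK (fun k => a (S k)) n z + eps * PK (fun k => b (S k)) n z - RtoC (if Nat.eqb n 0 then 0%R else beta).
Proof. intros Hb. assert (Hne : RtoC (1 - beta) <> 0).
 { intro E. injection E. lra. }
 induction n.
 - unfold PK; simpl. apply Ceq; simpl; ring.
 - rewrite !PK_S, Cmult_plus_distr_r, IHn. unfold cE. rewrite RtoC_inv by lra.
   destruct n; simpl.
   + unfold PK; simpl. field. auto.
   + field. auto.
Qed.

Lemma cE0 (a b : nat -> C) beta eps : a 1%nat = 1 -> b 1%nat = 0 -> (beta < 1)%R -> cE a b beta eps 0%nat = 1.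
Proof. intros H1 H2 Hb. unfold cE. rewrite H1, H2. simpl. rewrite RtoC_inv by lra.
 rewrite RtoC_minus. field. intro E. apply (f_equal fst) in E. simpl in E. lra. Qed.

Lemma cE_conv (a b : nat -> C) (h g : C -> C) beta eps z :
  in_H0 a b h g -> (beta < 1)%R -> Cmod eps = 1%R -> (Cmod z < 1)%R -> z <> 0 ->
  conv (cE a b beta eps) z ((h z / z + eps * (g z / z) - RtoC beta) * RtoC (/ (1 - beta))).
Proof. intros [Ha0 [Ha1 [Hb0 [Hb1 Hser]]]] Hb He Hz Hz0.
 destruct (Hser z Hz) as [Hh Hg]. apply pseries_conv in Hh. apply pseries_conv in Hg.
 set (L := (h z / z + eps * (g z / z) - RtoC beta) * RtoC (/ (1 - beta))).
 assert (Hne : RtoC (1 - beta) <> 0) by (intro E; injection E; lra).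
 assert (Key : forall n, (0 < n)%nat ->
   (PK (cE a b beta eps) n z - L) * (RtoC (1 - beta) * z) = (PK a (S n) z - h z) + eps * (PK b (S n) z - g z)).
 { intros n Hn. assert (E1 := PK_cE a b beta eps z n ltac:(lra)).
   destruct (Nat.eqb_spec n 0); [lia|].
   assert (E2 := PK_shift a n z). assert (E3 := PK_shift b n z). rewrite Ha0 in E2. rewrite Hb0 in E3.
   transitivity ((PK (cE a b beta eps) n z * RtoC (1 - beta)) * z - L * RtoC (1 - beta) * z). ring.
   rewrite E1. replace (L * RtoC (1 - beta) * z) with (h z + eps * g z - RtoC beta * z).
   2:{ unfold L. rewrite RtoC_inv by lra. field. split; auto. }
   transitivity (PK (fun k => a (S k)) n z * z + eps * (PK (fun k => b (S k)) n z * z) - RtoC beta * z - (h z + eps * g z - RtoC beta * z)). ring.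
   rewrite E2, E3. ring. }
 intros e0 He0. assert (Hzm : (0 < Cmod z)%R) by (apply Cmod_gt_0; auto).
 set (k := ((1 - beta) * Cmod z)%R). assert (Hk : (0 < k)%R) by (unfold k; apply Rmult_lt_0_compat; lra).
 destruct (Hh (e0 * k / 2)%R ltac:(apply Rdiv_lt_0_compat; nra)) as [N1 HN1].
 destruct (Hg (e0 * k / 2)%R ltac:(apply Rdiv_lt_0_compat; nra)) as [N2 HN2].
 exists (S (N1 + N2)). intros n Hn.
 specialize (Key n ltac:(lia)). specialize (HN1 (S n) ltac:(lia)). specialize (HN2 (S n) ltac:(lia)).
 assert (M : (Cmod (PK (cE a b beta eps) n z - L) * k < e0 * k)%R).
 { assert (Hk' : Cmod (RtoC (1 - beta) * z) = k).
   { unfold k. rewrite Cmod_mult, Cmod_R, Rabs_pos_eq by lra. reflexivity. }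
   rewrite <- Hk' at 1. rewrite <- Cmod_mult, Key. eapply Rle_lt_trans. apply Cmod_triangle.
   rewrite Cmod_mult, He, Rmult_1_l. lra. }
 apply (Rmult_lt_reg_r k); auto.
Qed.

Lemma cE_conv0 (a b : nat -> C) beta eps :
  a 1%nat = 1 -> b 1%nat = 0 -> (beta < 1)%R -> conv (cE a b beta eps) 0 1.
Proof. intros H1 H2 Hb e He. exists 1%nat. intros n Hn. rewrite PK_zero by lia. rewrite cE0 by auto.
 replace (1 - 1) with (RtoC 0) by ring. rewrite Cmod_0. auto. Qed.

Lemma Re_mult_R (w : C) (x : R) : Re (w * RtoC x) = (Re w * x)%R.
Proof. destruct w; simpl; ring. Qed.

Lemma cE_pos (a b : nat -> C) (h g : C -> C) beta eps :
  in_G0H beta a b h g -> (0 <= beta < 1)%R -> Cmod eps = 1%R -> Hposc (cE a b beta eps).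
Proof. intros [H0 [_ Hc]] Hb He z Hz. destruct H0 as [Ha0 [Ha1 [Hb0 [Hb1 Hser]]]].
 destruct (Ceq_dec z 0) as [Z|Z].
 - subst. exists 1. split. apply cE_conv0; auto; lra. simpl; lra.
 - eexists. split. apply cE_conv; auto. split; auto. lra.
   rewrite Re_mult_R. apply Rmult_le_pos; [|left; apply Rinv_0_lt_compat; lra].
   rewrite Re_minus, Re_plus. simpl (Re (RtoC beta)).
   assert (A1 := Re_ge_negmod (eps * (g z / z))). rewrite Cmod_mult, He, Rmult_1_l in A1.
   specialize (Hc z Hz Z). lra.
Qed.
Open Scope C_scope.

Lemma align_neg (v : C) : exists e, Cmod e = 1%R /\ Re (e * v) = (- Cmod v)%R.
Proof. destruct (Ceq_dec v 0) as [Z|Z].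
 - exists 1. subst. rewrite Cmod_1, Cmod_0. split; auto. simpl; ring.
 - assert (Hm : (0 < Cmod v)%R) by (apply Cmod_gt_0; auto).
   exists (- Cconj v * RtoC (/ Cmod v)). split.
   + rewrite Cmod_mult, Cmod_opp, Cmod_conj, Cmod_R, Rabs_pos_eq. field; lra. left; apply Rinv_0_lt_compat; auto.
   + replace (- Cconj v * RtoC (/ Cmod v) * v) with (- ((v * Cconj v) * RtoC (/ Cmod v))) by ring.
     rewrite <- Cmod2_conj. simpl. field. lra.
Qed.

Lemma align_plus (u v : C) : exists e, Cmod e = 1%R /\ Cmod (u + e * v) = (Cmod u + Cmod v)%R.
Proof. destruct (Ceq_dec v 0) as [Z|Z].
 { exists 1. subst. rewrite Cmod_1, Cmod_0. split; auto. rewrite Cmult_0_r, Cplus_0_r. ring. }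
 destruct (Ceq_dec u 0) as [Zu|Zu].
 { exists 1. subst. rewrite Cmod_1, Cmod_0. split; auto. rewrite Cplus_0_l, Cmult_1_l. ring. }
 assert (Hm : (0 < Cmod v)%R) by (apply Cmod_gt_0; auto).
 assert (Hu : (0 < Cmod u)%R) by (apply Cmod_gt_0; auto).
 exists (u * Cconj v * RtoC (/ (Cmod u * Cmod v))). split.
 - rewrite !Cmod_mult, Cmod_conj, Cmod_R, Rabs_pos_eq. field; lra. left; apply Rinv_0_lt_compat; nra.
 - replace (u + u * Cconj v * RtoC (/ (Cmod u * Cmod v)) * v) with (u * (1 + (v * Cconj v) * RtoC (/ (Cmod u * Cmod v)))) by ring.
   rewrite <- Cmod2_conj, <- RtoC_mult, <- RtoC_plus, Cmod_mult, Cmod_R, Rabs_pos_eq.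
   + field. lra.
   + assert (0 <= Cmod v ^ 2 * / (Cmod u * Cmod v))%R. { apply Rmult_le_pos. nra. left; apply Rinv_0_lt_compat; nra. } lra.
Qed.

Lemma coef_thm beta (a b : nat -> C) h g : (0 <= beta < 1)%R -> in_G0H beta a b h g ->
  forall n, (2 <= n)%nat -> (Cmod (a n) + Cmod (b n) <= 2 * (1 - beta))%R.
Proof. intros Hb HG n Hn. destruct (align_plus (a n) (b n)) as [e [He Ee]].
 assert (HG' := HG). destruct HG' as [[Ha0 [Ha1 [Hb0 [Hb1 _]]]] _].
 assert (K := coef_bound (cE a b beta e) (n - 1) (cE0 a b beta e Ha1 Hb1 ltac:(lra)) (cE_pos a b h g beta e HG Hb He) ltac:(lia)).
 unfold cE in K. replace (S (n - 1)) with n in K by lia. destruct (Nat.eqb_spec (n - 1) 0); [lia|].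
 rewrite Cmod_mult, Cmod_R, Rabs_pos_eq in K by (left; apply Rinv_0_lt_compat; lra).
 replace (a n + e * b n - 0) with (a n + e * b n) in K by ring. rewrite Ee in K.
 apply (Rmult_le_compat_r (1 - beta)) in K; [|lra]. rewrite Rmult_assoc, Rinv_l, Rmult_1_r in K by lra. lra.
Qed.

Lemma conv_unique_const (c : nat -> C) z l v : conv c z l -> (forall n, (0 < n)%nat -> PK c n z = v) -> l = v.
Proof. intros Hc Hv. assert (E : l - v = 0).
 { apply Cmod_eq_0. apply Rle_antisym; [|apply Cmod_ge_0].
   apply le_eps. intros e He. destruct (Hc e He) as [N HN]. specialize (HN (S N) ltac:(lia)).
   rewrite Hv in HN by lia. rewrite Cmod_sub_sym in HN. lra. }
 replace l with (l - v + v) by ring. rewrite E. ring. Qed.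

Lemma growth_thm beta (a b : nat -> C) h g : (0 <= beta < 1)%R -> in_G0H beta a b h g ->
  forall z : C, in_disk z ->
        (beta * Cmod z + (1 - beta) * ((1 - Cmod z) / (1 + Cmod z)) * Cmod z
           <= Cmod (harm h g z))%R /\
        (Cmod (harm h g z)
           <= beta * Cmod z + (1 - beta) * ((1 + Cmod z) / (1 - Cmod z)) * Cmod z)%R.
Proof. intros Hb HG z Hz. unfold in_disk in Hz.
 assert (HG' := HG). destruct HG' as [[Ha0 [Ha1 [Hb0 [Hb1 Hser]]]] _].
 assert (Tri1 : (Cmod (harm h g z) <= Cmod (h z) + Cmod (g z))%R).
 { unfold harm. eapply Rle_trans. apply Cmod_triangle. rewrite Cmod_conj. lra. }
 assert (Tri2 : (Cmod (h z) - Cmod (g z) <= Cmod (harm h g z))%R).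
 { unfold harm. assert (T := Cmod_triangle (h z + Cconj (g z)) (- Cconj (g z))).
   replace (h z + Cconj (g z) + - Cconj (g z)) with (h z) in T by ring. rewrite Cmod_opp, Cmod_conj in T. lra. }
 destruct (Ceq_dec z 0) as [Z|Z].
 - subst. destruct (Hser 0 Hz) as [Hh Hg]. apply pseries_conv in Hh. apply pseries_conv in Hg.
   assert (h 0 = 0) by (apply (conv_unique_const a 0); auto; intros; rewrite PK_zero; auto).
   assert (g 0 = 0) by (apply (conv_unique_const b 0); auto; intros; rewrite PK_zero; auto).
   rewrite Cmod_0 in *. rewrite H, H0, Cmod_0 in Tri1. pose proof (Cmod_ge_0 (harm h g 0)). split; lra.
 - set (r := Cmod z) in *. assert (Hr : (0 < r)%R) by (apply Cmod_gt_0; auto).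
   set (u := h z / z). set (v := g z / z).
   assert (Hu : Cmod (h z) = (Cmod u * r)%R).
   { unfold u. rewrite Cmod_div by auto. change (Cmod z) with r. field. lra. }
   assert (Hv : Cmod (g z) = (Cmod v * r)%R).
   { unfold v. rewrite Cmod_div by auto. change (Cmod z) with r. field. lra. }
   assert (Hinv : (0 < / (1 - beta))%R) by (apply Rinv_0_lt_compat; lra).
   split.
   + destruct (align_neg v) as [e [He Ee]].
     assert (K := harnack (cE a b beta e) z _ (cE0 a b beta e Ha1 Hb1 ltac:(lra)) (cE_pos a b h g beta e HG Hb He)
       (cE_conv a b h g beta e z (proj1 HG) ltac:(lra) He Hz Z) Hz). fold r u v in K.
     rewrite Re_mult_R, Re_minus, Re_plus, Ee in K. simpl (Re (RtoC beta)) in K.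
     assert (K2 : ((1 - r) / (1 + r) * (1 - beta) <= Re u - Cmod v - beta)%R).
     { apply (Rmult_le_compat_r (1 - beta)) in K; [|lra]. rewrite Rmult_assoc, Rinv_l, Rmult_1_r in K by lra. lra. }
     assert (Ru := Re_le_Cmod u). assert (Re u <= Cmod u)%R by (eapply Rle_trans; [apply Rle_abs|exact Ru]).
     rewrite Hu, Hv in Tri2.
     assert (beta + (1 - r) / (1 + r) * (1 - beta) <= Cmod u - Cmod v)%R by lra.
     apply Rmult_le_compat_r with (r := r) in H0; [|lra]. nra.
   + destruct (align_plus u v) as [e [He Ee]].
     assert (K := modbound (cE a b beta e) z _ (cE0 a b beta e Ha1 Hb1 ltac:(lra)) (cE_pos a b h g beta e HG Hb He)
       (cE_conv a b h g beta e z (proj1 HG) ltac:(lra) He Hz Z) Hz). fold r u v in K.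
     rewrite Cmod_mult, Cmod_R, Rabs_pos_eq in K by lra.
     assert (K2 : (Cmod (u + e * v - RtoC beta) <= (1 + r) / (1 - r) * (1 - beta))%R).
     { apply (Rmult_le_compat_r (1 - beta)) in K; [|lra]. rewrite Rmult_assoc, Rinv_l, Rmult_1_r in K by lra. lra. }
     assert (K3 : (Cmod (u + e * v) <= beta + (1 + r) / (1 - r) * (1 - beta))%R).
     { assert (T := Cmod_triangle (u + e * v - RtoC beta) (RtoC beta)).
       replace (u + e * v - RtoC beta + RtoC beta) with (u + e * v) in T by ring.
       rewrite Cmod_R, Rabs_pos_eq in T by lra. lra. }
     rewrite Ee in K3. rewrite Hu, Hv in Tri1.
     apply Rmult_le_compat_r with (r := r) in K3; [|lra]. nra.
Qed.
Open Scope C_scope.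

Lemma ext_at_r beta r : (0 <= beta < 1)%R -> (0 <= r < 1)%R ->
  Cmod (harm (ext_h beta) ext_g (RtoC r)) = (beta * r + (1 - beta) * ((1 + r) / (1 - r)) * r)%R.
Proof. intros Hb Hr.
 assert (E : harm (ext_h beta) ext_g (RtoC r) = RtoC (beta * r + (1 - beta) * ((1 + r) / (1 - r)) * r)).
 { unfold harm, ext_h, ext_g. apply Ceq; simpl; field; lra. }
 rewrite E, Cmod_R, Rabs_pos_eq. reflexivity.
 assert (0 <= (1 + r) / (1 - r))%R by (apply Rdiv_le_0_compat; lra).
 apply Rplus_le_le_0_compat. apply Rmult_le_pos; lra. apply Rmult_le_pos; [apply Rmult_le_pos|]; lra.
Qed.

Lemma ext_at_mr beta r : (0 <= beta < 1)%R -> (0 <= r < 1)%R ->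
  Cmod (harm (ext_h beta) ext_g (RtoC (- r))) = (beta * r + (1 - beta) * ((1 - r) / (1 + r)) * r)%R.
Proof. intros Hb Hr.
 assert (E : harm (ext_h beta) ext_g (RtoC (- r)) = RtoC (- (beta * r + (1 - beta) * ((1 - r) / (1 + r)) * r))).
 { unfold harm, ext_h, ext_g. apply Ceq; simpl; field; lra. }
 rewrite E, Cmod_R, Rabs_Ropp, Rabs_pos_eq. reflexivity.
 assert (0 <= (1 - r) / (1 + r))%R by (apply Rdiv_le_0_compat; lra).
 apply Rplus_le_le_0_compat. apply Rmult_le_pos; lra. apply Rmult_le_pos; [apply Rmult_le_pos|]; lra.
Qed.

Lemma ext_PK beta (z : C) n : z <> 1 -> (PK (ext_a beta) (S (S n)) z - ext_h beta z) * (1 - z) =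
  - RtoC (2 * (1 - beta)) * z ^ (S (S n)).
Proof. intros Z. assert (Zq : 1 - z <> 0).
 { intro E. apply Z. transitivity (1 - (1 - z)). ring. rewrite E. ring. }
 induction n.
 - unfold PK, ext_h; simpl. field. auto.
 - rewrite PK_S. replace (ext_a beta (S (S n))) with (RtoC (2 * (1 - beta))) by reflexivity.
   transitivity ((PK (ext_a beta) (S (S n)) z - ext_h beta z) * (1 - z) + RtoC (2 * (1 - beta)) * z ^ S (S n) * (1 - z)).
   ring. rewrite IHn. rewrite (Cpow_S z (S (S n))). ring.
Qed.

Lemma ext_conv beta (z : C) : (0 <= beta < 1)%R -> (Cmod z < 1)%R -> conv (ext_a beta) z (ext_h beta z).
Proof. intros Hb Hz e He.
 assert (Z : z <> 1) by (intro E; subst; rewrite Cmod_1 in Hz; lra).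
 assert (Zq := one_minus_ne z Hz). assert (A := Cmod_1my z).
 set (k := (2 * (1 - beta))%R).
 destruct (pow_lt_1_zero (Cmod z) ltac:(rewrite Rabs_pos_eq; [lra|apply Cmod_ge_0]) (e * (1 - Cmod z) / (k + 1))%R) as [N HN].
 { apply Rdiv_lt_0_compat; [nra|unfold k; lra]. }
 exists (S (S N)). intros n Hn. destruct n as [|[|m]]; try lia.
 specialize (HN (S (S m)) ltac:(lia)). rewrite Rabs_pos_eq in HN by (apply pow_le, Cmod_ge_0).
 assert (E := ext_PK beta z m Z).
 assert (Eq : (Cmod (PK (ext_a beta) (S (S m)) z - ext_h beta z) * Cmod (1 - z) = k * Cmod z ^ S (S m))%R).
 { rewrite <- Cmod_mult, E, Cmod_mult, Cmod_opp, Cmod_R, Cmod_pow, Rabs_pos_eq. reflexivity. unfold k; lra. }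
 set (X := Cmod (PK (ext_a beta) (S (S m)) z - ext_h beta z)) in *.
 set (P := (Cmod z ^ S (S m))%R) in *.
 assert (HX : (0 <= X)%R) by apply Cmod_ge_0.
 assert (HP : (0 <= P)%R) by (apply pow_le, Cmod_ge_0).
 assert (X * (1 - Cmod z) <= k * P)%R. { rewrite <- Eq. apply Rmult_le_compat_l; lra. }
 assert (Hk : (0 <= k)%R) by (unfold k; lra).
 assert (k * P <= k * (e * (1 - Cmod z) / (k + 1)))%R by (apply Rmult_le_compat_l; lra).
 assert (k * (e * (1 - Cmod z) / (k + 1)) < e * (1 - Cmod z))%R.
 { replace (k * (e * (1 - Cmod z) / (k + 1)))%R with (e * (1 - Cmod z) * (k / (k + 1)))%R by (field; unfold k; lra).
   assert (k / (k + 1) < 1)%R. { apply (Rmult_lt_reg_r (k + 1)). unfold k; lra. unfold Rdiv. rewrite Rmult_assoc, Rinv_l; unfold k; lra. }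
   assert (0 < e * (1 - Cmod z))%R by nra. nra. }
 assert (X * (1 - Cmod z) < e * (1 - Cmod z))%R by lra.
 apply (Rmult_lt_reg_r (1 - Cmod z)); lra.
Qed.

Lemma ext_in beta : (0 <= beta < 1)%R -> in_G0H beta (ext_a beta) ext_b (ext_h beta) ext_g.
Proof. intros Hb. split; [|split].
 - split; [reflexivity|]. split; [reflexivity|]. split; [reflexivity|]. split; [reflexivity|].
   intros z Hz. unfold in_disk in Hz. split.
   + apply conv_pseries. apply ext_conv; auto.
   + apply conv_pseries. intros e He. exists 0%nat. intros n _. unfold PK, ext_g.
     rewrite csum_zero by (intros; unfold ext_b; ring). replace (0 - 0) with (RtoC 0) by ring. rewrite Cmod_0. lra.
 - simpl. unfold ext_b. rewrite Cmod_0. lra.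
 - intros z Hz Z. unfold in_disk in Hz. unfold ext_g. replace (0 / z) with (RtoC 0) by (field; auto). rewrite Cmod_0.
   assert (Zq := one_minus_ne z Hz).
   replace (ext_h beta z / z) with (RtoC beta + RtoC (1 - beta) * ((1 + z) / (1 - z))).
   + rewrite Re_plus. simpl (Re (RtoC beta)). rewrite Cmult_comm, Re_mult_R.
     assert (W := ReW_ge z Hz). assert (0 <= Cmod z)%R by apply Cmod_ge_0.
     assert (0 < (1 - Cmod z) / (1 + Cmod z))%R by (apply Rdiv_lt_0_compat; lra). nra.
   + unfold ext_h. rewrite !RtoC_minus, RtoC_mult, RtoC_minus. field. auto.
Qed.

Close Scope C_scope.

Theorem mainTheorem3 :
  forall beta : R, (0 <= beta < 1)%R ->
  (forall (a b : nat -> C) (h g : C -> C),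
     in_G0H beta a b h g ->
     (forall n : nat, (2 <= n)%nat -> (Cmod (a n) + Cmod (b n) <= 2 * (1 - beta))%R) /\
     (forall z : C, in_disk z ->
        (beta * Cmod z + (1 - beta) * ((1 - Cmod z) / (1 + Cmod z)) * Cmod z
           <= Cmod (harm h g z))%R /\
        (Cmod (harm h g z)
           <= beta * Cmod z + (1 - beta) * ((1 + Cmod z) / (1 - Cmod z)) * Cmod z)%R)) /\
  in_G0H beta (ext_a beta) ext_b (ext_h beta) ext_g /\
  (forall r : R, (0 <= r < 1)%R ->
     Cmod (harm (ext_h beta) ext_g (RtoC r))
       = (beta * r + (1 - beta) * ((1 + r) / (1 - r)) * r)%R /\
     Cmod (harm (ext_h beta) ext_g (RtoC (- r)))
       = (beta * r + (1 - beta) * ((1 - r) / (1 + r)) * r)%R).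
Proof.
  intros beta Hb. split; [|split].
  - intros a b h g HG. split.
    + apply (coef_thm beta a b h g Hb HG).
    + apply (growth_thm beta a b h g Hb HG).
  - apply ext_in; auto.
  - intros r Hr. split; [apply ext_at_r | apply ext_at_mr]; auto.
Qed.
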